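(* Let $m$ be an odd integer with $m\geq 7$, and let $p'$ be the smallest odd prime not dividing $m$. Then $p' < 0.6\cdot m$. *)

(* Defs.v *)
From mathcomp Require Import all_boot.

(* Main.v *)
Require Import Defs.
From mathcomp Require Import all_boot.
From mathcomp Require Import zify.

Lemma aux (m p' k : nat) :
  (forall q : nat, prime q -> odd q -> ~~ (q %| m) -> p' <= q) ->
  1 < k -> odd k -> (forall q, q %| k -> q %| m -> q = 1) -> p' <= k.
Proof.
move=> H k1 ok cop.
have pq := pdiv_prime k1.
have dq := pdiv_dvd k.
apply: leq_trans (dvdn_leq (ltnW k1) dq).
apply: H => //; first exact: dvdn_odd dq ok.
apply/negP => dm; have := cop _ dq dm => e.
by move: pq; rewrite e.
Qed.

(* p' < 0.6 * m is expressed over nat as 10 * p' < 6 * m. *)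
Theorem mainTheorem3 (m p' : nat) :
  odd m -> 7 <= m ->
  prime p' -> odd p' -> ~~ (p' %| m) ->
  (forall q : nat, prime q -> odd q -> ~~ (q %| m) -> p' <= q) ->
  10 * p' < 6 * m.
Proof.
move=> om m7 _ _ _ H.
have em : m = (m./2).*2 + 1 by rewrite -[LHS]odd_double_half om addnC.
set n := m./2 in em.
case on: (odd n).
- have : p' <= n.
    apply: (@aux m p' _ H); [lia | by rewrite ?on ?oddS ?on | ].
    move=> q qn qm; have q2 : q %| n.*2 by rewrite -muln2 dvdn_mulr.
    by move: qm; rewrite em (dvdn_addr _ q2) dvdn1 => /eqP.
  lia.
- have : p' <= n.+1.
    apply: (@aux m p' _ H); [lia | by rewrite ?on ?oddS ?on | ].
    move=> q qn qm; have q2 : q %| m + 1.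
      have -> : m + 1 = n.+1 * 2 by lia.
      exact: dvdn_mulr.
    by move: q2; rewrite (dvdn_addr _ qm) dvdn1 => /eqP.
  lia.
Qed.
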